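(* The interval-sphere model structure on $p\mathsf{Ch}^*_\mathbb{Q}$ is compactly generated: every domain object of a map in $\mathbb{I}$ is compact with respect to relative sequential $\mathbb{I}$-cell complexes.
   Context: $p\mathsf{Ch}^*_\mathbb{Q}=\mathsf{Fun}([0,\infty),\mathsf{Ch}^*_\mathbb{Q})$, non-negatively graded rational cochain complexes. $S^k=\mathbb{Q}$ in degree $k$; $D^k$ ($k\ge1$) is $\mathbb{Q}$ in degrees $k-1,k$ with identity differential; $D^0=0$. $\mathbb{S}^k_{[s,t)}$ ($0\le s<t<\infty$) is $0$ at $r<s$, $S^k$ at $s\le r<t$, $D^k$ at $r\ge t$; $\mathbb{S}^k_{[s,\infty)}$ is $0$ at $r<s$, $S^k$ at $r\ge s$; $\mathbb{D}^k_s$ is $0$ at $r<s$, $D^k$ at $r\ge s$ (structure maps identities/inclusions). The interval-sphere model structure has weak equivalences the pointwise quasi-isomorphisms, generating cofibrations $\mathbb{I}=\{\mathbb{S}^k_{[s,t)}\to\mathbb{D}^k_s: k\in\mathbb{N},0\le s<t\le\infty\}$ and generating trivial cofibrations $\{\mathbb{D}^k_t\to\mathbb{D}^k_s:0\le s<t<\infty\}\cup\{0\to\mathbb{D}^k_s\}$. A relative sequential $\mathbb{I}$-cell complex is a map $\mathbb{X}\to\mathbb{Y}=\mathrm{colim}_{i\in\omega}\mathbb{Y}_i$ with $\mathbb{Y}_0=\mathbb{X}$ and each $\mathbb{Y}_{i+1}$ a pushout of $\mathbb{Y}_i$ along a direct sum (over an arbitrary set) of maps in $\mathbb{I}$. An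 object $\mathbb{U}$ is compact with respect to such complexes if $\mathrm{colim}_i\mathrm{Hom}(\mathbb{U},\mathbb{Y}_i)\to\mathrm{Hom}(\mathbb{U},\mathbb{Y})$ is a bijection for each of them. *)

(* Defs.v *)
From HB Require Import structures.
From Stdlib Require Import Reals Relation_Operators.
From mathcomp Require Import all_boot all_order all_algebra.
From mathcomp Require Import Rstruct.
From mathcomp Require Import zify.
Unset Strict Implicit.
Unset Printing Implicit Defensive.
Import Order.TTheory GRing.Theory Num.Theory.
Local Open Scope ring_scope.

Definition nnR := {r : R | 0 <= r}.

(* Objects of pCh*_Q = Fun([0,oo), Ch*_Q): non-negatively graded rational *)
(* cochain complexes (degrees n : nat, differential of degree +1), with   *)
(* structure chain maps X(r) -> X(r') for r <= r', functorially.          *)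
Record pch := PCh {
  pobj : nnR -> nat -> lmodType rat;
  pd : forall r n, pobj r n -> pobj r n.+1;
  pmap : forall (r r' : nnR), val r <= val r' -> forall n, pobj r n -> pobj r' n;
  pd_lin : forall r n (a : rat) x y, pd r n (a *: x + y) = a *: pd r n x + pd r n y;
  pmap_lin : forall r r' h n (a : rat) x y,
      pmap r r' h n (a *: x + y) = a *: pmap r r' h n x + pmap r r' h n y;
  pdd : forall r n x, pd r n.+1 (pd r n x) = 0;
  pmap_d : forall r r' h n x, pd r' n (pmap r r' h n x) = pmap r r' h n.+1 (pd r n x);
  pmap_id : forall r h n x, pmap r r h n x = x;
  pmap_comp : forall r1 r2 r3 h12 h23 h13 n x,
      pmap r2 r3 h23 n (pmap r1 r2 h12 n x) = pmap r1 r3 h13 n x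
}.

Record phom (X Y : pch) := PHom {
  hc : forall r n, pobj X r n -> pobj Y r n;
  hc_lin : forall r n (a : rat) x y, hc r n (a *: x + y) = a *: hc r n x + hc r n y;
  hc_d : forall r n x, pd Y r n (hc r n x) = hc r n.+1 (pd X r n x);
  hc_nat : forall r r' h n x, pmap Y r r' h n (hc r n x) = hc r' n (pmap X r r' h n x)
}.

Arguments hc {X Y} f r n x : rename.
Arguments hc_lin {X Y} f r n a x y : rename.
Arguments hc_d {X Y} f r n x : rename.
Arguments hc_nat {X Y} f r r' h n x : rename.

Definition heq (X Y : pch) (f g : phom X Y) : Prop :=
  forall r n x, hc f r n x = hc g r n x.

(* Composition in diagrammatic order: hcomp f g = g o f. *)
Definition hcomp (X Y Z : pch) (f : phom X Y) (g : phom Y Z) : phom X Z.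
Proof.
refine (@PHom X Z (fun r n x => hc g r n (hc f r n x)) _ _ _).
- by move=> r n a x y; rewrite !hc_lin.
- by move=> r n x; rewrite !hc_d.
- by move=> r r' h n x; rewrite !hc_nat.
Defined.
Arguments heq {X Y} f g.
Arguments hcomp {X Y Z} f g.

(* Auxiliary: objects whose spaces are 0 or Q (as 'rV[rat]_0 / 'rV[rat]_1) *)
(* with all non-trivial differentials / structure maps the identity of Q  *)
(* (multiplication by the all-ones matrix).                               *)
Definition onesmx (a b : nat) : 'M[rat]_(a, b) := const_mx 1.

Lemma onesmx_mul (a b c : nat) :
  onesmx a b *m onesmx b c = const_mx (b%:R).
Proof.
apply/matrixP => i j; rewrite !mxE.
rewrite (eq_bigr (fun _ => 1)); last by move=> k _; rewrite !mxE mulr1.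
by rewrite sumr_const card_ord.
Qed.

Lemma onesmx_mul2 (a c : nat) (b : bool) (u : 'rV[rat]_a) :
  u *m onesmx a b *m onesmx b c = if b then u *m onesmx a c else 0.
Proof.
rewrite -mulmxA onesmx_mul; case: b => /=.
  by rewrite /onesmx.
by rewrite (_ : const_mx _ = 0) ?mulmx0 //; apply/matrixP => i j; rewrite !mxE.
Qed.

Lemma onesmx0 (a c : bool) (u : 'rV[rat]_a) :
  ~~ a || ~~ c -> u *m onesmx a c = 0.
Proof.
case: a u => [|] u; case: c => //= _; first exact: thinmx0.
  by rewrite [u]thinmx0 mul0mx.
by rewrite [u]thinmx0 mul0mx.
Qed.

Lemma onesmx1 (a : bool) (u : 'rV[rat]_a) : u *m onesmx a a = u.
Proof.
case: a u => u /=.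
  rewrite (_ : onesmx 1 1 = 1%:M) ?mulmx1 //.
  by apply/matrixP => i j; rewrite !mxE !ord1.
by rewrite [u]thinmx0 mul0mx.
Qed.

Lemma onesmx_lin (a b : nat) (k : rat) (x y : 'rV[rat]_a) :
  (k *: x + y) *m onesmx a b = k *: (x *m onesmx a b) + y *m onesmx a b.
Proof. by rewrite mulmxDl scalemxAl. Qed.

Section Mk01.
Variable dim : nnR -> nat -> bool.
Hypothesis Hdd : forall r n, ~~ [&& dim r n, dim r n.+1 & dim r n.+2].
Hypothesis Hcomp : forall (r1 r2 r3 : nnR) n, val r1 <= val r2 -> val r2 <= val r3 ->
  dim r1 n -> dim r3 n -> dim r2 n.
Hypothesis Hdnat : forall (r r' : nnR) n, val r <= val r' ->
  dim r n -> dim r' n.+1 -> dim r' n && dim r n.+1.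

Definition mk01 : pch.
Proof.
refine (@PCh (fun r n => 'rV[rat]_(dim r n) : lmodType rat)
   (fun r n u => u *m onesmx _ _) (fun r r' h n u => u *m onesmx _ _) _ _ _ _ _ _).
- by move=> *; apply: onesmx_lin.
- by move=> *; apply: onesmx_lin.
- move=> r n x /=; rewrite onesmx_mul2; case: ifP => // h1; rewrite onesmx0 //.
  by move: (Hdd r n); rewrite h1 /=; case: (dim r n); case: (dim r n.+2).
- move=> r r' h n x /=; rewrite !onesmx_mul2.
  case E1: (dim r' n); case E2: (dim r n.+1) => //.
  + apply: onesmx0; rewrite -negb_and; apply/negP => /andP [a b].
    by move: (Hdnat _ _ _ h a b); rewrite E2 andbF.
  + apply: esym; apply: onesmx0; rewrite -negb_and; apply/negP => /andP [a b].
    by move: (Hdnat _ _ _ h a b); rewrite E1.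
- by move=> r h n x /=; apply: onesmx1.
- move=> r1 r2 r3 h12 h23 h13 n x /=; rewrite onesmx_mul2.
  case E: (dim r2 n) => //; apply: esym; apply: onesmx0.
  rewrite -negb_and; apply/negP => /andP [a b]; by move: (Hcomp _ _ _ _ h12 h23 a b); rewrite E.
Defined.
End Mk01.

Section Mk01Hom.
Variables (dX dY : nnR -> nat -> bool).
Hypotheses (HddX : forall r n, ~~ [&& dX r n, dX r n.+1 & dX r n.+2])
  (HcompX : forall (r1 r2 r3 : nnR) n, val r1 <= val r2 -> val r2 <= val r3 ->
     dX r1 n -> dX r3 n -> dX r2 n)
  (HdnatX : forall (r r' : nnR) n, val r <= val r' ->
     dX r n -> dX r' n.+1 -> dX r' n && dX r n.+1)
  (HddY : forall r n, ~~ [&& dY r n, dY r n.+1 & dY r n.+2])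
  (HcompY : forall (r1 r2 r3 : nnR) n, val r1 <= val r2 -> val r2 <= val r3 ->
     dY r1 n -> dY r3 n -> dY r2 n)
  (HdnatY : forall (r r' : nnR) n, val r <= val r' ->
     dY r n -> dY r' n.+1 -> dY r' n && dY r n.+1).
Hypothesis HhomD : forall r n, dX r n -> dY r n.+1 -> dY r n && dX r n.+1.
Hypothesis HhomN : forall (r r' : nnR) n, val r <= val r' ->
  dX r n -> dY r' n -> dY r n && dX r' n.

Definition mk01hom :
  phom (mk01 dX HddX HcompX HdnatX) (mk01 dY HddY HcompY HdnatY).
Proof.
refine (@PHom (mk01 dX HddX HcompX HdnatX) (mk01 dY HddY HcompY HdnatY)
   (fun r n u => u *m onesmx _ _) _ _ _).
- by move=> *; apply: onesmx_lin.
- move=> r n x /=; rewrite !onesmx_mul2.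
  case E1: (dY r n); case E2: (dX r n.+1) => //.
  + apply: onesmx0; rewrite -negb_and; apply/negP => /andP [a b].
    by move: (HhomD _ _ a b); rewrite E2 andbF.
  + apply: esym; apply: onesmx0; rewrite -negb_and; apply/negP => /andP [a b].
    by move: (HhomD _ _ a b); rewrite E1.
- move=> r r' h n x /=; rewrite !onesmx_mul2.
  case E1: (dY r n); case E2: (dX r' n) => //.
  + apply: onesmx0; rewrite -negb_and; apply/negP => /andP [a b].
    by move: (HhomN _ _ _ h a b); rewrite E2 andbF.
  + apply: esym; apply: onesmx0; rewrite -negb_and; apply/negP => /andP [a b].
    by move: (HhomN _ _ _ h a b); rewrite E1.
Defined.
End Mk01Hom.

(* An upper bound t of an interval is an element of (0,oo]:  Some t = t,  *)
(* None = oo.                                                              *)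
Definition before (r : R) (t : option R) : bool :=
  if t is Some t then r < t else true.
Definition ltRo (s : R) (t : option R) : bool :=
  if t is Some t then s < t else true.

(* Dimension (0 or 1) of the degree-n part at time r of S^k_[s,t):        *)
(* S^k (Q in degree k) for s <= r < t, D^k (Q in degrees k-1, k, k >= 1;  *)
(* D^0 = 0) for r >= t, and 0 for r < s.                                   *)
Definition sdim (k : nat) (s : R) (t : option R) (r : nnR) (n : nat) : bool :=
  ((s <= val r) && before (val r) t && (n == k))
  || ((s <= val r) && ~~ before (val r) t && (0 < k)%N && ((n == k) || (n.+1 == k))).

Lemma before_mono (r r' : R) t : r <= r' -> before r' t -> before r t.
Proof. by case: t => //= t h h'; apply: le_lt_trans h h'. Qed.

Lemma sdim_dd k s t r n : ~~ [&& sdim k s t r n, sdim k s t r n.+1 & sdim k s t r n.+2].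
Proof.
rewrite /sdim; case: (s <= val r); case: before => /=; lia.
Qed.

Lemma sdim_comp k s t (r1 r2 r3 : nnR) n : val r1 <= val r2 -> val r2 <= val r3 ->
  sdim k s t r1 n -> sdim k s t r3 n -> sdim k s t r2 n.
Proof.
move=> h12 h23; rewrite /sdim.
have hA : s <= val r1 -> s <= val r2 by move=> h; apply: le_trans h h12.
have hB3 : before (val r3) t -> before (val r2) t by apply: before_mono.
have hB1 : before (val r2) t -> before (val r1) t by apply: before_mono.
move: hA hB3 hB1.
case: (s <= val r1); case: (s <= val r2); case: (s <= val r3);
case: (before (val r1) t); case: (before (val r2) t); case: (before (val r3) t) => //=;
lia.
Qed.

Lemma sdim_dnat k s t (r r' : nnR) n : val r <= val r' ->
  sdim k s t r n -> sdim k s t r' n.+1 -> sdim k s t r' n && sdim k s t r n.+1.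
Proof.
move=> h; rewrite /sdim.
have hA : s <= val r -> s <= val r' by move=> h'; apply: le_trans h' h.
have hB : before (val r') t -> before (val r) t by apply: before_mono.
move: hA hB.
case: (s <= val r); case: (s <= val r');
case: (before (val r) t); case: (before (val r') t) => //=; lia.
Qed.

Definition Sph (k : nat) (s : R) (t : option R) : pch :=
  mk01 (sdim k s t) (sdim_dd k s t) (sdim_comp k s t) (sdim_dnat k s t).

(* D^k_s : 0 for r < s, D^k for r >= s.  It is (literally) given by the   *)
(* same dimension function with the empty S-part [s,s).                   *)
Definition Dsk (k : nat) (s : R) : pch := Sph k s (Some s).

Lemma sdim_D k s r n : sdim k s (Some s) r n =
  (s <= val r) && (0 < k)%N && ((n == k) || (n.+1 == k)).
Proof.
rewrite /sdim /=; case: leP => h /=; last by [].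
by [].
Qed.

Lemma incl_homD k s t r n : sdim k s t r n -> sdim k s (Some s) r n.+1 ->
  sdim k s (Some s) r n && sdim k s t r n.+1.
Proof.
rewrite !sdim_D /sdim; case: (s <= val r); case: before => /=; lia.
Qed.

Lemma incl_homN k s t (r r' : nnR) n : val r <= val r' ->
  sdim k s t r n -> sdim k s (Some s) r' n -> sdim k s (Some s) r n && sdim k s t r' n.
Proof.
move=> h; rewrite !sdim_D /sdim.
have hA : s <= val r -> s <= val r' by move=> h'; apply: le_trans h' h.
have hB : before (val r') t -> before (val r) t by apply: before_mono.
move: hA hB.
case: (s <= val r); case: (s <= val r');
case: (before (val r) t); case: (before (val r') t) => //=; lia.
Qed.

Definition Igen (k : nat) (s : R) (t : option R) : phom (Sph k s t) (Dsk k s) :=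
  mk01hom (sdim k s t) (sdim k s (Some s)) (sdim_dd k s t) (sdim_comp k s t) (sdim_dnat k s t) (sdim_dd k s (Some s)) (sdim_comp k s (Some s)) (sdim_dnat k s (Some s))
    (incl_homD k s t) (incl_homN k s t).

Set Implicit Arguments.

Definition is_coprod (J : Type) (A : J -> pch) (C : pch)
    (inj : forall j, phom (A j) C) : Prop :=
  forall (Z : pch) (f : forall j, phom (A j) Z),
    exists g : phom C Z,
      (forall j, heq (hcomp (inj j) g) (f j)) /\
      (forall g' : phom C Z, (forall j, heq (hcomp (inj j) g') (f j)) -> heq g' g).

Definition is_pushout (A B C P : pch) (f : phom A B) (g : phom A C)
    (i : phom B P) (j : phom C P) : Prop :=
  heq (hcomp f i) (hcomp g j) /\
  forall (Z : pch) (u : phom B Z) (v : phom C Z),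
    heq (hcomp f u) (hcomp g v) ->
    exists w : phom P Z,
      heq (hcomp i w) u /\ heq (hcomp j w) v /\
      (forall w' : phom P Z, heq (hcomp i w') u -> heq (hcomp j w') v -> heq w' w).

Definition is_seq_colim (Y : nat -> pch) (y : forall i, phom (Y i) (Y i.+1))
    (Yinf : pch) (c : forall i, phom (Y i) Yinf) : Prop :=
  (forall i, heq (hcomp (y i) (c i.+1)) (c i)) /\
  forall (Z : pch) (z : forall i, phom (Y i) Z),
    (forall i, heq (hcomp (y i) (z i.+1)) (z i)) ->
    exists w : phom Yinf Z,
      (forall i, heq (hcomp (c i) w) (z i)) /\
      (forall w' : phom Yinf Z, (forall i, heq (hcomp (c i) w') (z i)) -> heq w' w).

Definition I_cell_step (A B : pch) (f : phom A B) : Prop :=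
  exists (J : Type) (k : J -> nat) (s : J -> R) (t : J -> option R),
    (forall j, 0 <= s j /\ ltRo (s j) (t j)) /\
    exists (SJ DJ : pch)
           (iS : forall j, phom (Sph (k j) (s j) (t j)) SJ)
           (iD : forall j, phom (Dsk (k j) (s j)) DJ),
      is_coprod iS /\ is_coprod iD /\
      exists (sigma : phom SJ DJ) (a : phom SJ A) (g : phom DJ B),
        (forall j, heq (hcomp (iS j) sigma) (hcomp (Igen (k j) (s j) (t j)) (iD j))) /\
        is_pushout sigma a g f.

Definition rel_seq_I_cell (Y : nat -> pch) (y : forall i, phom (Y i) (Y i.+1))
    (Yinf : pch) (c : forall i, phom (Y i) Yinf) : Prop :=
  (forall i, I_cell_step (y i)) /\ is_seq_colim y c.

(* The colimit of sets colim_i Hom(U, Y i): the disjoint union of the      *)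
(* Hom(U, Y i) modulo the equivalence relation generated by heq and by    *)
(* (i, g) ~ (i+1, y_i o g).                                                *)
Inductive colim_step (U : pch) (Y : nat -> pch) (y : forall i, phom (Y i) (Y i.+1)) :
    {i : nat & phom U (Y i)} -> {i : nat & phom U (Y i)} -> Prop :=
| cs_heq i (g g' : phom U (Y i)) :
    heq g g' -> colim_step y (existT _ i g) (existT _ i g')
| cs_map i (g : phom U (Y i)) :
    colim_step y (existT _ i g) (existT _ i.+1 (hcomp g (y i))).

(* U is compact w.r.t. relative sequential I-cell complexes: the canonical *)
(* map colim_i Hom(U, Y i) -> Hom(U, Yinf) is a bijection.                 *)
Definition compact_rel_I_cell (U : pch) : Prop :=
  forall (Y : nat -> pch) (y : forall i, phom (Y i) (Y i.+1))
         (Yinf : pch) (c : forall i, phom (Y i) Yinf),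
    rel_seq_I_cell y c ->
    (forall f : phom U Yinf, exists i (g : phom U (Y i)), heq (hcomp g (c i)) f) /\
    (forall i j (g : phom U (Y i)) (g' : phom U (Y j)),
        heq (hcomp g (c i)) (hcomp g' (c j)) ->
        clos_refl_sym_trans _ (colim_step y) (existT _ i g) (existT _ j g')).

(* Main.v *)
Require Import Defs.
From HB Require Import structures.
From Stdlib Require Import Reals Relation_Operators Eqdep_dec.
From mathcomp Require Import all_boot all_order all_algebra.
From mathcomp Require Import Rstruct boolp zify.
Import Defs.
Import Order.TTheory GRing.Theory Num.Theory.
Local Open Scope ring_scope.

Definition hid (X : pch) : phom X X.
Proof. by refine (@PHom X X (fun r n x => x) _ _ _). Defined.

Lemma hc0 (X W : pch) (f : phom X W) r n : hc f r n 0 = 0.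
Proof.
have := hc_lin f r n (-1) 0 0.
by rewrite scaler0 addr0 scaleN1r addNr.
Qed.

Lemma hcD (X W : pch) (f : phom X W) r n x x' : hc f r n (x + x') = hc f r n x + hc f r n x'.
Proof. by have := hc_lin f r n 1 x x'; rewrite !scale1r. Qed.

Lemma hcZ (X W : pch) (f : phom X W) r n a x : hc f r n (a *: x) = a *: hc f r n x.
Proof. by have := hc_lin f r n a x 0; rewrite !addr0 hc0 addr0. Qed.

Lemma hcN (X W : pch) (f : phom X W) r n x : hc f r n (- x) = - hc f r n x.
Proof. by rewrite -scaleN1r hcZ scaleN1r. Qed.

Definition ev (P : nat -> Prop) := exists M0, forall M, (M0 <= M)%N -> P M.

Lemma ev_and (P Q : nat -> Prop) : ev P -> ev Q -> ev (fun M => P M /\ Q M).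
Proof.
move=> [a Ha] [b Hb]; exists (maxn a b) => M h; split.
  by apply: Ha; apply: leq_trans h; apply: leq_maxl.
by apply: Hb; apply: leq_trans h; apply: leq_maxr.
Qed.

Lemma ev_ge m : ev (fun M => (m <= M)%N).
Proof. by exists m. Qed.

Lemma ev_mono (P Q : nat -> Prop) : ev P -> (forall M, P M -> Q M) -> ev Q.
Proof. by move=> [a Ha] H; exists a => M /Ha /H. Qed.

Arguments ev_and {P Q}.
Arguments ev_mono {P Q}.

Lemma natdec : forall x y : nat, {x = y} + {x <> y}.
Proof. by move=> x y; apply: (decP eqP). Qed.

Section Colim.
Variables (Y : nat -> pch) (y : forall i, phom (Y i) (Y i.+1)).

Fixpoint tr (i d : nat) : phom (Y i) (Y (d + i)) :=
  match d return phom (Y i) (Y (d + i)) with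
  | 0 => hid (Y i)
  | d'.+1 => hcomp (tr i d') (y (d' + i))
  end.

Section RN.
Variables (r : nnR) (n : nat).

Definition Sig := {i : nat & (pobj (Y i) r n : Type)}.
Definition step (a : Sig) : Sig :=
  existT (fun j => (pobj (Y j) r n : Type)) (tag a).+1 (hc (y (tag a)) r n (tagged a)).

Lemma tag_iter d a : tag (iter d step a) = (d + tag a)%N.
Proof. by elim: d => //= d ->. Qed.

Lemma iter_step_tr d i (x : pobj (Y i) r n) :
  iter d step (existT _ i x) = existT (fun j => (pobj (Y j) r n : Type)) (d + i)%N (hc (tr i d) r n x).
Proof. by elim: d => //= d ->. Qed.

Definition lv (M : nat) (a : Sig) : pobj (Y M) r n :=
  tagged_as (existT (fun j => (pobj (Y j) r n : Type)) M 0) (iter (M - tag a) step a).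

Lemma tagged_as_same (M : nat) (u : pobj (Y M) r n) (v : Sig) :
  tag v = M -> existT (fun j => (pobj (Y j) r n : Type)) M
     (tagged_as (existT (fun j => (pobj (Y j) r n : Type)) M u) v) = v.
Proof. by case: v => j x /= e; subst j; rewrite tagged_asE. Qed.

Lemma lv_tr d i (x : pobj (Y i) r n) : lv (d + i) (existT _ i x) = hc (tr i d) r n x.
Proof. by rewrite /lv /= addnK iter_step_tr tagged_asE. Qed.

Lemma lvE M a : (tag a <= M)%N ->
  existT (fun j => (pobj (Y j) r n : Type)) M (lv M a) = iter (M - tag a) step a.
Proof. by move=> h; rewrite /lv; apply: tagged_as_same; rewrite tag_iter subnK. Qed.

Lemma existT_inj M (u v : pobj (Y M) r n) :
  existT (fun j => (pobj (Y j) r n : Type)) M u = existT _ M v -> u = v.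
Proof. exact: (inj_pair2_eq_dec _ natdec). Qed.

Lemma lv_iter M d a : (d + tag a <= M)%N -> lv M (iter d step a) = lv M a.
Proof.
move=> h; apply: existT_inj; rewrite !lvE ?tag_iter //; last by lia.
rewrite -iterD; congr iter; lia.
Qed.

Lemma lv_step M a : (tag a < M)%N -> lv M (step a) = lv M a.
Proof. by move=> h; exact: (@lv_iter M 1 a h). Qed.

Lemma lv_lin M i (al : rat) (x x' : pobj (Y i) r n) : (i <= M)%N ->
  lv M (existT _ i (al *: x + x')) = al *: lv M (existT _ i x) + lv M (existT _ i x').
Proof.
move=> h; have [d ->] : exists d, M = (d + i)%N by exists (M - i)%N; rewrite subnK.
by rewrite !lv_tr hc_lin.
Qed.

Lemma lv_Z M i (al : rat) (x : pobj (Y i) r n) : (i <= M)%N ->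
  lv M (existT _ i (al *: x)) = al *: lv M (existT _ i x).
Proof.
move=> h; have [d ->] : exists d, M = (d + i)%N by exists (M - i)%N; rewrite subnK.
by rewrite !lv_tr hcZ.
Qed.

Lemma lv_D M i (x x' : pobj (Y i) r n) : (i <= M)%N ->
  lv M (existT _ i (x + x')) = lv M (existT _ i x) + lv M (existT _ i x').
Proof.
move=> h; have [d ->] : exists d, M = (d + i)%N by exists (M - i)%N; rewrite subnK.
by rewrite !lv_tr hcD.
Qed.

Lemma lv_N M i (x : pobj (Y i) r n) : (i <= M)%N ->
  lv M (existT _ i (- x)) = - lv M (existT _ i x).
Proof.
move=> h; have [d ->] : exists d, M = (d + i)%N by exists (M - i)%N; rewrite subnK.
by rewrite !lv_tr hcN.
Qed.

Lemma lv_0 M i : (i <= M)%N -> lv M (existT _ i (0 : pobj (Y i) r n)) = 0.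
Proof.
move=> h; have [d ->] : exists d, M = (d + i)%N by exists (M - i)%N; rewrite subnK.
by rewrite !lv_tr hc0.
Qed.

Lemma lv_lv M m a : (tag a <= m)%N -> (m <= M)%N -> lv M (existT _ m (lv m a)) = lv M a.
Proof. by move=> h1 h2; rewrite lvE // lv_iter // subnK. Qed.

Definition req (a b : Sig) : Prop := ev (fun M => lv M a = lv M b).

Lemma req_refl a : req a a. Proof. by exists 0%N. Qed.
Lemma req_sym a b : req a b -> req b a.
Proof. rewrite /req => h; by apply: (ev_mono h) => M ->. Qed.
Lemma req_trans a b c : req a b -> req b c -> req a c.
Proof. rewrite /req => h1 h2; by apply: (ev_mono (ev_and h1 h2)) => M [-> ->]. Qed.

Arguments req_sym {a b}.
Arguments req_trans {a b c}.

Definition canon (a : Sig) : Sig :=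
  xchoose (ex_intro (fun b => `[< req b a >]) a (introT (asboolP _) (req_refl a))).

Lemma canonP a : req (canon a) a.
Proof. by apply/asboolP; apply: (xchooseP (ex_intro (fun b => `[< req b a >]) a _)). Qed.

Lemma canon_eq a b : req a b -> canon a = canon b.
Proof.
move=> h; apply: eq_xchoose => c; apply/asboolP/asboolP => h'.
  exact: req_trans h' h.
exact: req_trans h' (req_sym h).
Qed.

Lemma canon_idem a : canon (canon a) == canon a.
Proof. by apply/eqP; apply: canon_eq; apply: canonP. Qed.

Definition Q := {a : Sig | canon a == a}.

Definition pi (a : Sig) : Q := exist _ (canon a) (canon_idem a).

Lemma piK (q : Q) : pi (sval q) = q.
Proof. by case: q => a h; apply: val_inj => /=; apply/eqP. Qed.

Lemma pi_eq a b : req a b -> pi a = pi b.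
Proof. by move=> h; apply: val_inj => /=; apply: canon_eq. Qed.

Lemma pi_req a b : pi a = pi b -> req a b.
Proof.
move=> /(congr1 sval) /= e.
apply: req_trans (req_sym (canonP a)) _; rewrite e; exact: canonP.
Qed.

Definition lvq M (q : Q) := lv M (sval q).

Lemma lvq_pi a : ev (fun M => lvq M (pi a) = lv M a).
Proof. exact: canonP. Qed.

Lemma Q_ext q1 q2 : ev (fun M => lvq M q1 = lvq M q2) -> q1 = q2.
Proof. by move=> h; rewrite -(piK q1) -(piK q2); apply: pi_eq. Qed.

Definition zeroS : Sig := existT _ 0%N (0 : pobj (Y 0) r n).
Definition oppS (a : Sig) : Sig := existT _ (tag a) (- tagged a).
Definition scaleS (al : rat) (a : Sig) : Sig := existT _ (tag a) (al *: tagged a).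
Definition addS (a b : Sig) : Sig :=
  existT _ (maxn (tag a) (tag b)) (lv (maxn (tag a) (tag b)) a + lv (maxn (tag a) (tag b)) b).

Lemma lv_tag a M : (tag a <= M)%N -> lv M a = lv M (existT _ (tag a) (tagged a)).
Proof. by case: a. Qed.

Lemma lv_addS M a b : (maxn (tag a) (tag b) <= M)%N -> lv M (addS a b) = lv M a + lv M b.
Proof.
move=> h; have h1 := leq_maxl (tag a) (tag b); have h2 := leq_maxr (tag a) (tag b).
by rewrite /addS lv_D // lv_lv // lv_lv.
Qed.

Lemma lv_oppS M a : (tag a <= M)%N -> lv M (oppS a) = - lv M a.
Proof. by case: a => i x h; rewrite /oppS /= lv_N. Qed.

Lemma lv_scaleS M al a : (tag a <= M)%N -> lv M (scaleS al a) = al *: lv M a.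
Proof. by case: a => i x h; rewrite /scaleS /= lv_Z. Qed.

Lemma lv_zeroS M : lv M zeroS = 0.
Proof. by rewrite /zeroS lv_0. Qed.

Definition zeroQ : Q := pi zeroS.
Definition oppQ (q : Q) : Q := pi (oppS (sval q)).
Definition addQ (q q' : Q) : Q := pi (addS (sval q) (sval q')).
Definition scaleQ (al : rat) (q : Q) : Q := pi (scaleS al (sval q)).

Lemma lvq_zero : ev (fun M => lvq M zeroQ = 0).
Proof. by apply: (ev_mono (lvq_pi zeroS)) => M ->; rewrite lv_zeroS. Qed.

Lemma lvq_opp q : ev (fun M => lvq M (oppQ q) = - lvq M q).
Proof.
apply: (ev_mono (ev_and (lvq_pi (oppS (sval q))) (ev_ge (tag (sval q))))) => M [-> h].
by rewrite lv_oppS.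
Qed.

Lemma lvq_add q q' : ev (fun M => lvq M (addQ q q') = lvq M q + lvq M q').
Proof.
apply: (ev_mono (ev_and (lvq_pi (addS (sval q) (sval q'))) (ev_ge (maxn (tag (sval q)) (tag (sval q')))))) => M [-> h].
by rewrite lv_addS.
Qed.

Lemma lvq_scale al q : ev (fun M => lvq M (scaleQ al q) = al *: lvq M q).
Proof.
apply: (ev_mono (ev_and (lvq_pi (scaleS al (sval q))) (ev_ge (tag (sval q))))) => M [-> h].
by rewrite lv_scaleS.
Qed.

Lemma addQA : associative addQ.
Proof.
move=> a b c; apply: Q_ext.
have := ev_and (ev_and (lvq_add a (addQ b c)) (lvq_add b c))
               (ev_and (lvq_add (addQ a b) c) (lvq_add a b)).
move=> H; by apply: (ev_mono H) => M [[-> ->] [-> ->]]; rewrite addrA.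
Qed.

Lemma addQC : commutative addQ.
Proof.
move=> a b; apply: Q_ext.
have := ev_and (lvq_add a b) (lvq_add b a).
move=> H; by apply: (ev_mono H) => M [-> ->]; rewrite addrC.
Qed.

Lemma add0Q : left_id zeroQ addQ.
Proof.
move=> a; apply: Q_ext.
have := ev_and (lvq_add zeroQ a) lvq_zero.
move=> H; by apply: (ev_mono H) => M [-> ->]; rewrite add0r.
Qed.

Lemma addNQ : left_inverse zeroQ oppQ addQ.
Proof.
move=> a; apply: Q_ext.
have := ev_and (ev_and (lvq_add (oppQ a) a) lvq_zero) (lvq_opp a).
move=> H; by apply: (ev_mono H) => M [[-> ->] ->]; rewrite addNr.
Qed.

Lemma scaleQA a b v : scaleQ a (scaleQ b v) = scaleQ (a * b) v.
Proof.
apply: Q_ext.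
have := ev_and (ev_and (lvq_scale a (scaleQ b v)) (lvq_scale b v)) (lvq_scale (a * b) v).
move=> H; by apply: (ev_mono H) => M [[-> ->] ->]; rewrite scalerA.
Qed.

Lemma scale1Q : left_id 1 scaleQ.
Proof.
move=> v; apply: Q_ext.
by apply: (ev_mono (lvq_scale 1 v)) => M ->; rewrite scale1r.
Qed.

Lemma scaleQDr a u v : scaleQ a (addQ u v) = addQ (scaleQ a u) (scaleQ a v).
Proof.
apply: Q_ext.
have := ev_and (ev_and (lvq_scale a (addQ u v)) (lvq_add u v))
   (ev_and (lvq_add (scaleQ a u) (scaleQ a v)) (ev_and (lvq_scale a u) (lvq_scale a v))).
move=> H; by apply: (ev_mono H) => M [[-> ->] [-> [-> ->]]]; rewrite scalerDr.
Qed.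

Lemma scaleQDl v a b : scaleQ (a + b) v = addQ (scaleQ a v) (scaleQ b v).
Proof.
apply: Q_ext.
have := ev_and (lvq_scale (a + b) v)
   (ev_and (lvq_add (scaleQ a v) (scaleQ b v)) (ev_and (lvq_scale a v) (lvq_scale b v))).
move=> H; by apply: (ev_mono H) => M [-> [-> [-> ->]]]; rewrite scalerDl.
Qed.

End RN.
End Colim.

HB.instance Definition _ Y y r n := Choice.on (Q Y y r n).
HB.instance Definition _ Y y r n :=
  GRing.isZmodule.Build (Q Y y r n) (@addQA Y y r n) (@addQC Y y r n) (@add0Q Y y r n) (@addNQ Y y r n).
HB.instance Definition _ Y y r n :=
  GRing.Zmodule_isLmodule.Build rat (Q Y y r n) (@scaleQA Y y r n) (@scale1Q Y y r n)
    (@scaleQDr Y y r n) (@scaleQDl Y y r n).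


Arguments tr {_} _ _ _.
Arguments step {_} _ {_ _} _.
Arguments lv {_} _ {_ _} _ _.
Arguments req {_} _ {_ _} _ _.
Arguments canon {_} _ {_ _} _.
Arguments pi {_} _ {_ _} _.
Arguments lvq {_} _ {_ _} _ _.
Arguments lv_tr {_ _ _ _} _ _ _.
Arguments lvE {_ _ _ _} _ _.
Arguments lv_iter {_ _ _ _} _ _ _.
Arguments lv_step {_ _ _ _} _ _.
Arguments lv_lin {_ _ _ _} _ _ _ _ _.
Arguments canonP {_ _ _ _} _.
Arguments pi_eq {_ _ _ _} _ _.
Arguments pi_req {_ _ _ _} _ _.
Arguments lvq_pi {_ _ _ _} _.
Arguments Q_ext {_ _ _ _} _ _.
Arguments lvq_zero {_ _ _ _}.
Arguments lvq_add {_ _ _ _} _ _.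
Arguments lvq_scale {_ _ _ _} _ _.

Section Colim2.
Variables (Y : nat -> pch) (y : forall i, phom (Y i) (Y i.+1)).

Lemma lvq_lin {r n} (al : rat) (q q' : Q Y y r n) :
  ev (fun M => lvq y M (al *: q + q') = al *: lvq y M q + lvq y M q').
Proof.
have := ev_and (lvq_add (al *: q) q') (lvq_scale al q).
by move=> H; apply: (ev_mono H) => M [-> ->].
Qed.

Lemma lvq0 r n : ev (fun M => lvq y M (0 : Q Y y r n) = 0).
Proof. exact: lvq_zero. Qed.

Definition dS {r n} (a : Sig Y r n) : Sig Y r n.+1 :=
  existT (fun j => (pobj (Y j) r n.+1 : Type)) (tag a) (pd (Y (tag a)) r n (tagged a)).
Definition mS {r r'} (h : val r <= val r') {n} (a : Sig Y r n) : Sig Y r' n :=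
  existT (fun j => (pobj (Y j) r' n : Type)) (tag a) (pmap (Y (tag a)) r r' h n (tagged a)).

Lemma lv_dS {r n M} (a : Sig Y r n) : (tag a <= M)%N ->
  lv y M (dS a) = pd (Y M) r n (lv y M a).
Proof.
case: a => i x /= h.
have [d ->] : exists d, M = (d + i)%N by exists (M - i)%N; rewrite subnK.
by rewrite /dS /= !lv_tr hc_d.
Qed.

Lemma lv_mS {r r'} h {n M} (a : Sig Y r n) : (tag a <= M)%N ->
  lv y M (mS h a) = pmap (Y M) r r' h n (lv y M a).
Proof.
case: a => i x /= hh.
have [d ->] : exists d, M = (d + i)%N by exists (M - i)%N; rewrite subnK.
by rewrite /mS /= !lv_tr hc_nat.
Qed.

Definition pdZ {r n} (q : Q Y y r n) : Q Y y r n.+1 := pi y (dS (sval q)).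
Definition pmapZ {r r'} (h : val r <= val r') {n} (q : Q Y y r n) : Q Y y r' n :=
  pi y (mS h (sval q)).

Lemma lvq_pd {r n} (q : Q Y y r n) : ev (fun M => lvq y M (pdZ q) = pd (Y M) r n (lvq y M q)).
Proof.
have := ev_and (@lvq_pi Y y r n.+1 (dS (sval q))) (ev_ge (tag (sval q))).
by move=> H; apply: (ev_mono H) => M [-> hh]; rewrite lv_dS.
Qed.

Lemma lvq_pm {r r'} h {n} (q : Q Y y r n) :
  ev (fun M => lvq y M (pmapZ h q) = pmap (Y M) r r' h n (lvq y M q)).
Proof.
have := ev_and (@lvq_pi Y y r' n (mS h (sval q))) (ev_ge (tag (sval q))).
by move=> H; apply: (ev_mono H) => M [-> hh]; rewrite lv_mS.
Qed.

Lemma pd_linZ r n (a : rat) (x x' : Q Y y r n) :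
  pdZ (a *: x + x') = a *: pdZ x + pdZ x'.
Proof.
apply: Q_ext.
have := ev_and (ev_and (lvq_pd (a *: x + x')) (lvq_lin a x x'))
  (ev_and (lvq_lin a (pdZ x) (pdZ x')) (ev_and (lvq_pd x) (lvq_pd x'))).
by move=> H; apply: (ev_mono H) => M [[-> ->] [-> [-> ->]]]; rewrite pd_lin.
Qed.

Lemma pmap_linZ (r r' : nnR) (h : val r <= val r') n (a : rat) (x x' : Q Y y r n) :
  pmapZ h (a *: x + x') = a *: pmapZ h x + pmapZ h x'.
Proof.
apply: Q_ext.
have := ev_and (ev_and (lvq_pm h (a *: x + x')) (lvq_lin a x x'))
  (ev_and (lvq_lin a (pmapZ h x) (pmapZ h x')) (ev_and (lvq_pm h x) (lvq_pm h x'))).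
by move=> H; apply: (ev_mono H) => M [[-> ->] [-> [-> ->]]]; rewrite pmap_lin.
Qed.

Lemma pddZ r n (x : Q Y y r n) : pdZ (pdZ x) = 0.
Proof.
apply: Q_ext.
have := ev_and (ev_and (lvq_pd (pdZ x)) (lvq_pd x)) (@lvq0 r n.+2).
by move=> H; apply: (ev_mono H) => M [[-> ->] ->]; rewrite pdd.
Qed.

Lemma pmap_dZ (r r' : nnR) (h : val r <= val r') n (x : Q Y y r n) : pdZ (pmapZ h x) = pmapZ h (pdZ x).
Proof.
apply: Q_ext.
have := ev_and (ev_and (lvq_pd (pmapZ h x)) (lvq_pm h x))
  (ev_and (lvq_pm h (pdZ x)) (lvq_pd x)).
by move=> H; apply: (ev_mono H) => M [[-> ->] [-> ->]]; rewrite pmap_d.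
Qed.

Lemma pmap_idZ (r : nnR) (h : val r <= val r) n (x : Q Y y r n) : pmapZ h x = x.
Proof.
apply: Q_ext.
have := lvq_pm h x.
by move=> H; apply: (ev_mono H) => M ->; rewrite pmap_id.
Qed.

Lemma pmap_compZ (r1 r2 r3 : nnR) (h12 : val r1 <= val r2) (h23 : val r2 <= val r3) (h13 : val r1 <= val r3) n (x : Q Y y r1 n) :
  pmapZ h23 (pmapZ h12 x) = pmapZ (r' := r3) h13 x.
Proof.
apply: Q_ext.
have := ev_and (ev_and (lvq_pm h23 (pmapZ h12 x)) (lvq_pm h12 x)) (lvq_pm h13 x).
by move=> H; apply: (ev_mono H) => M [[-> ->] ->]; rewrite (pmap_comp _ _ _ _ _ _ h13).
Qed.

Definition Zc : pch :=
  @PCh (fun r n => (Q Y y r n : lmodType rat)) (@pdZ) (@pmapZ) pd_linZ pmap_linZ pddZ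
    pmap_dZ pmap_idZ pmap_compZ.

Lemma lvq_piy {r n} (a : Sig Y r n) : ev (fun M => lvq y M (pi y a) = lv y M a).
Proof. exact: lvq_pi. Qed.

Definition inS {r n} i (x : pobj (Y i) r n) : Sig Y r n :=
  existT (fun j => (pobj (Y j) r n : Type)) i x.

Definition zc (i : nat) : phom (Y i) Zc.
Proof.
refine (@PHom (Y i) Zc (fun r n x => pi y (inS i x)) _ _ _).
- move=> r n a x x'; apply: Q_ext.
  have := ev_and (ev_and (lvq_piy (inS i (a *: x + x'))) (ev_ge i))
    (ev_and (lvq_lin a (pi y (inS i x)) (pi y (inS i x')))
       (ev_and (lvq_piy (inS i x)) (lvq_piy (inS i x')))).
  by move=> H; apply: (ev_mono H) => M [[-> hi] [-> [-> ->]]]; rewrite lv_lin.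
- move=> r n x; apply: Q_ext.
  have := ev_and (ev_and (lvq_piy (inS i (pd (Y i) r n x))) (ev_ge i))
    (ev_and (lvq_pd (pi y (inS i x))) (lvq_piy (inS i x))).
  move=> H; apply: (ev_mono H) => M [[-> hi] [-> ->]].
  by rewrite -(lv_dS (inS i x) hi).
- move=> r r' h n x; apply: Q_ext.
  have := ev_and (ev_and (lvq_piy (inS i (pmap (Y i) r r' h n x))) (ev_ge i))
    (ev_and (lvq_pm h (pi y (inS i x))) (lvq_piy (inS i x))).
  move=> H; apply: (ev_mono H) => M [[-> hi] [-> ->]].
  by rewrite -(lv_mS h (inS i x) hi).
Defined.

Lemma zc_cocone i : heq (hcomp (y i) (zc i.+1)) (zc i).
Proof.
move=> r n x /=; apply: pi_eq; exists i.+1 => M hM.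
exact: (lv_step M (existT _ i x) hM).
Qed.

Section WithC.
Variables (Yinf : pch) (c : forall i, phom (Y i) Yinf).
Hypothesis Hc : forall i, heq (hcomp (y i) (c i.+1)) (c i).

Definition cval {r n} (a : Sig Y r n) : pobj Yinf r n := hc (c (tag a)) r n (tagged a).

Lemma c_tr r n d i (x : pobj (Y i) r n) :
  hc (c (d + i)) r n (hc (tr y i d) r n x) = hc (c i) r n x.
Proof.
elim: d => //= d IH.
by have := Hc (d + i) r n (hc (tr y i d) r n x); rewrite /= => ->.
Qed.

Lemma cval_lv {r n M} (a : Sig Y r n) : (tag a <= M)%N -> hc (c M) r n (lv y M a) = cval a.
Proof.
case: a => i x /= h.
have [d ->] : exists d, M = (d + i)%N by exists (M - i)%N; rewrite subnK.
by rewrite lv_tr c_tr.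
Qed.

Lemma cval_req {r n} (a b : Sig Y r n) : req y a b -> cval a = cval b.
Proof.
move=> [M0 H].
set M := maxn M0 (maxn (tag a) (tag b)).
have h0 : (M0 <= M)%N by rewrite /M; lia.
have ha : (tag a <= M)%N by rewrite /M; lia.
have hb : (tag b <= M)%N by rewrite /M; lia.
by rewrite -(cval_lv _ ha) -(cval_lv _ hb) H.
Qed.

Definition vc : phom Zc Yinf.
Proof.
refine (@PHom Zc Yinf (fun r n q => cval (sval q)) _ _ _).
- move=> r n a q q' /=.
  have := ev_and (lvq_lin a q q') (ev_and (ev_ge (tag (sval (a *: q + q'))))
    (ev_and (ev_ge (tag (sval q))) (ev_ge (tag (sval q'))))).
  move=> [M0 H]; have [e [h1 [h2 h3]]] := H M0 (leqnn M0).
  rewrite -(cval_lv _ h1) -(cval_lv _ h2) -(cval_lv _ h3).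
  by rewrite /lvq in e; rewrite e hc_lin.
- move=> r n q /=.
  have := ev_and (lvq_pd q) (ev_and (ev_ge (tag (sval (pdZ q)))) (ev_ge (tag (sval q)))).
  move=> [M0 H]; have [e [h1 h2]] := H M0 (leqnn M0).
  rewrite -(cval_lv _ h1) -(cval_lv _ h2).
  by rewrite /lvq in e; rewrite e hc_d.
- move=> r r' h n q /=.
  have := ev_and (lvq_pm h q) (ev_and (ev_ge (tag (sval (pmapZ h q)))) (ev_ge (tag (sval q)))).
  move=> [M0 H]; have [e [h1 h2]] := H M0 (leqnn M0).
  rewrite -(cval_lv _ h1) -(cval_lv _ h2).
  by rewrite /lvq in e; rewrite e hc_nat.
Defined.

Lemma colim_facts :
  (forall (Z : pch) (z : forall i, phom (Y i) Z),
    (forall i, heq (hcomp (y i) (z i.+1)) (z i)) ->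
    exists w : phom Yinf Z,
      (forall i, heq (hcomp (c i) w) (z i)) /\
      (forall w' : phom Yinf Z, (forall i, heq (hcomp (c i) w') (z i)) -> heq w' w)) ->
  (exists pre : forall r n, pobj Yinf r n -> Sig Y r n,
     forall r n (e : pobj Yinf r n), cval (pre r n e) = e) /\
  (forall r n (a b : Sig Y r n), cval a = cval b -> req y a b).
Proof.
move=> Hu.
have [w [Hw _]] := Hu Zc zc zc_cocone.
have [w0 [_ Hun]] := Hu Yinf c Hc.
have E1 : heq (hcomp w vc) w0.
  apply: Hun => i r n x /=.
  have := Hw i r n x; rewrite /= => ->.
  exact: (cval_req _ _ (@canonP Y y _ _ (inS i x))).
have E2 : heq (hid Yinf) w0 by apply: Hun.
split.
  exists (fun r n e => sval (hc w r n e)) => r n e.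
  have := E1 r n e; rewrite /= => ->.
  by rewrite -(E2 r n e).
move=> r n a b e; apply: pi_req.
have key : forall a : Sig Y r n, hc w r n (cval a) = pi y a.
  by case=> i x; have := Hw i r n x; rewrite /=.
by rewrite -!key e.
Qed.

End WithC.
End Colim2.

Lemma pd_zero (X : pch) r n : pd X r n 0 = 0.
Proof. by have := pd_lin X r n (-1) 0 0; rewrite scaler0 addr0 scaleN1r addNr. Qed.

Lemma pd_scale (X : pch) r n (a : rat) x : pd X r n (a *: x) = a *: pd X r n x.
Proof. by have := pd_lin X r n a x 0; rewrite !addr0 pd_zero addr0. Qed.

Lemma pmap_zero (X : pch) r r' h n : pmap X r r' h n 0 = 0.
Proof. by have := pmap_lin X r r' h n (-1) 0 0; rewrite scaler0 addr0 scaleN1r addNr. Qed.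

Lemma pmap_scale (X : pch) r r' h n (a : rat) x :
  pmap X r r' h n (a *: x) = a *: pmap X r r' h n x.
Proof. by have := pmap_lin X r r' h n a x 0; rewrite !addr0 pmap_zero addr0. Qed.

Definition pmapT {W : pch} (a b : nnR) n (x : pobj W a n) : pobj W b n :=
  if (val a <= val b) =P true is ReflectT h then pmap W a b h n x else 0.

Lemma pmapTE {W : pch} {a b : nnR} (h : val a <= val b) n x :
  pmapT a b n x = pmap W a b h n x.
Proof.
rewrite /pmapT; case: eqP => [h'|]; last by rewrite h.
by rewrite (eq_irrelevance h' h).
Qed.

Lemma pmapT_comp {W : pch} {a b c : nnR} (hab : val a <= val b) (hbc : val b <= val c) n x :
  pmap W b c hbc n (pmapT a b n x) = pmapT a c n x.
Proof.
by rewrite (pmapTE hab) (pmapTE (le_trans hab hbc)) (pmap_comp _ _ _ _ _ _ (le_trans hab hbc)).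
Qed.

Definition lam {b : nat} (u : 'rV[rat]_b) : rat := \sum_(j < b) u 0 j.

Lemma lam_lin b (a : rat) (u v : 'rV[rat]_b) : lam (a *: u + v) = a * lam u + lam v.
Proof.
rewrite /lam mulr_sumr -big_split; apply: eq_bigr => j _; by rewrite !mxE.
Qed.

Lemma lam_ones a b (u : 'rV[rat]_a) : lam (u *m onesmx a b) = lam u *+ b.
Proof.
rewrite /lam (eq_bigr (fun _ => \sum_(j < a) u 0 j)) ?sumr_const ?card_ord //.
move=> j _; rewrite !mxE; apply: eq_bigr => i _; by rewrite !mxE mulr1.
Qed.

Lemma lam_dim0 {b : nat} (u : 'rV[rat]_b) : b = 0%N -> lam u = 0.
Proof. by move=> hb; rewrite /lam big1 // => -[j hj] _; exfalso; move: hj; rewrite hb. Qed.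

Lemma lam_ee b : lam (onesmx 1 b) = b%:R.
Proof.
rewrite /lam (eq_bigr (fun _ => 1)) ?sumr_const ?card_ord //.
by move=> j _; rewrite !mxE.
Qed.

Lemma lam_rv1 {b : bool} (u : 'rV[rat]_b) : u = lam u *: onesmx 1 b.
Proof.
case: b u => u /=; apply/matrixP => i j; rewrite !mxE.
  by rewrite mulr1 /lam big_ord1 !ord1.
by case: j.
Qed.

Definition stepH {U : pch} {Y : nat -> pch} (y : forall i, phom (Y i) (Y i.+1))
  (a : {i : nat & phom U (Y i)}) : {i : nat & phom U (Y i)} :=
  existT (fun i => phom U (Y i)) (tag a).+1 (hcomp (tagged a) (y (tag a))).

Lemma clos_iterH (U : pch) (Y : nat -> pch) (y : forall i, phom (Y i) (Y i.+1)) d a :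
  clos_refl_sym_trans _ (colim_step (U := U) y) a (iter d (stepH y) a).
Proof.
elim: d => [|d IH]; first exact: rst_refl.
apply: rst_trans IH _; apply: rst_step.
rewrite iterS; case: (iter d (stepH y) a) => m h; exact: cs_map.
Qed.

Lemma iterH_spec (U : pch) (Y : nat -> pch) (y : forall i, phom (Y i) (Y i.+1)) d i
  (h : phom U (Y i)) :
  exists h' : phom U (Y (d + i)),
    iter d (stepH y) (existT _ i h) = existT (fun i => phom U (Y i)) (d + i)%N h' /\
    forall r n x, hc h' r n x = hc (tr y i d) r n (hc h r n x).
Proof.
elim: d => [|d [h' [e1 e2]]]; first by exists h.
exists (hcomp h' (y (d + i))); split; first by rewrite /= e1.
by move=> r n x /=; rewrite e2.
Qed.

Lemma nb_some {r : R} {t : option R} : ~~ before r t -> exists tt, t = Some tt /\ tt <= r.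
Proof. case: t => [tt|] //= h; exists tt; split => //; by rewrite leNgt. Qed.

Section Sphere.
Variables (k : nat) (s : R) (t : option R).
Hypotheses (hs : 0 <= s) (hst : ltRo s t).

Local Notation S := (Sph k s t).

Definition ee r n : pobj S r n := onesmx 1 (sdim k s t r n).

Lemma pd_ee r n : sdim k s t r n -> pd S r n (ee r n) = ee r n.+1.
Proof. by move=> D; rewrite /= /ee onesmx_mul D /onesmx. Qed.

Lemma pm_ee {r r'} h {n} : sdim k s t r n -> pmap S r r' h n (ee r n) = ee r' n.
Proof. by move=> D; rewrite /= /ee onesmx_mul D /onesmx. Qed.

Lemma rv_dim0 {r n} (u : pobj S r n) : ~~ sdim k s t r n -> u = 0.
Proof. move=> D; apply/matrixP => i [j hj]; exfalso; move: hj; by rewrite (negbTE D). Qed.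

Lemma lam_pdS {r n} (u : pobj S r n) : lam (pd S r n u) = lam u *+ sdim k s t r n.+1.
Proof. exact: (@lam_ones (sdim k s t r n) (sdim k s t r n.+1) u). Qed.

Lemma lam_pmS {r r'} h {n} (u : pobj S r n) : lam (pmap S r r' h n u) = lam u *+ sdim k s t r' n.
Proof. exact: (@lam_ones (sdim k s t r n) (sdim k s t r' n) u). Qed.

Lemma lam_S0 {r n} (u : pobj S r n) : ~~ sdim k s t r n -> lam u = 0.
Proof. by move=> D; apply: (@lam_dim0 (sdim k s t r n) u); rewrite (negbTE D). Qed.

Lemma before_s : before s t.
Proof. by case: t hst. Qed.

Lemma sdim_spec {r n} : sdim k s t r n ->
  s <= val r /\ (n = k \/ (n.+1 = k /\ ~~ before (val r) t)).
Proof.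
rewrite /sdim; case: (s <= val r); case: (before (val r) t) => //= H; split => //; lia.
Qed.

Lemma sdim_succk r : ~~ sdim k s t r k.+1.
Proof. rewrite /sdim; case: (s <= val r); case: (before (val r) t) => /=; lia. Qed.

Lemma sdim_kfalse {r} : s <= val r -> ~~ sdim k s t r k -> ~~ before (val r) t /\ k = 0%N.
Proof. rewrite /sdim => ->; case: (before (val r) t) => /= H; split => //; lia. Qed.

Lemma sdim_low {r n} : s <= val r -> ~~ before (val r) t -> n.+1 = k ->
  sdim k s t r n && sdim k s t r n.+1.
Proof. rewrite /sdim => -> /negbTE -> hk /=; lia. Qed.

Lemma sdim_k {r} : s <= val r -> before (val r) t -> sdim k s t r k.
Proof. by rewrite /sdim => -> -> /=; rewrite eqxx. Qed.

Lemma S_ext (W : pch) (h1 h2 : phom S W) (s0 t0 : nnR) :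
  val s0 = s -> (forall tt, t = Some tt -> val t0 = tt) ->
  (forall n, n = k -> hc h1 s0 n (ee s0 n) = hc h2 s0 n (ee s0 n)) ->
  (forall n tt, t = Some tt -> n.+1 = k -> hc h1 t0 n (ee t0 n) = hc h2 t0 n (ee t0 n)) ->
  heq h1 h2.
Proof.
move=> hs0 ht0 H1 H2 r n u.
case D: (sdim k s t r n); last first.
  by rewrite (rv_dim0 u (negbT D)) !hc0.
rewrite (lam_rv1 u) !hcZ; congr (_ *: _).
change (hc h1 r n (ee r n) = hc h2 r n (ee r n)).
have [hsr [hn | [hn hnb]]] := sdim_spec D.
  have hle : val s0 <= val r by rewrite hs0.
  have Ds0 : sdim k s t s0 n by rewrite hn; apply: sdim_k; rewrite hs0 ?lexx ?before_s.
  by rewrite -(pm_ee hle Ds0) -!hc_nat H1.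
have [tt [ht htr]] := nb_some hnb.
have hv := ht0 tt ht.
have hle : val t0 <= val r by rewrite hv.
have hstt : s <= tt by move: hst; rewrite ht /= => /ltW.
have hA : s <= val t0 by rewrite hv.
have hB : ~~ before (val t0) t by rewrite ht hv /= ltxx.
have Dt0 : sdim k s t t0 n by have /andP [] := sdim_low hA hB hn.
by rewrite -(pm_ee hle Dt0) -!hc_nat (H2 n tt ht hn).
Qed.

Section Mk.
Variables (W : pch) (s0 t0 : nnR) (X : forall n, pobj W s0 n) (Z : forall n, pobj W t0 n).
Hypotheses (hs0 : val s0 = s) (ht0 : forall tt, t = Some tt -> val t0 = tt)
  (C1 : pd W s0 k (X k) = 0)
  (C2 : forall tt, t = Some tt -> forall n, n.+1 = k ->
          pd W t0 n (Z n) = pmapT s0 t0 n.+1 (X n.+1))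
  (C3 : forall tt, t = Some tt -> k = 0%N -> pmapT s0 t0 0 (X 0%N) = 0).

Definition E r n : pobj W r n :=
  if sdim k s t r n then (if n == k then pmapT s0 r n (X n) else pmapT t0 r n (Z n)) else 0.

Lemma Emul r n (x : rat) : (x *+ sdim k s t r n) *: E r n = x *: E r n.
Proof. by rewrite /E; case: (sdim k s t r n); rewrite ?mulr1n ?scaler0. Qed.

Lemma hle_s0 {r : nnR} : s <= val r -> val s0 <= val r.
Proof. by rewrite hs0. Qed.

Lemma t0_facts {r : nnR} : ~~ before (val r) t -> exists tt, t = Some tt /\ val t0 <= val r /\ val s0 <= val t0.
Proof.
move=> hnb; have [tt [ht htr]] := nb_some hnb; exists tt; split => //.
have hv := ht0 tt ht.
split; first by rewrite hv.
by move: hst; rewrite ht /= hv hs0 => /ltW.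
Qed.

Lemma KD r n : sdim k s t r n -> pd W r n (E r n) = E r n.+1.
Proof.
move=> D; have [hsr [hn | [hn hnb]]] := sdim_spec D.
  subst n; rewrite /E D eqxx (negbTE (sdim_succk r)).
  by rewrite (pmapTE (hle_s0 hsr)) pmap_d C1 pmap_zero.
have [tt [ht [htr hst0]]] := t0_facts hnb.
have /andP [_ D1] := sdim_low hsr hnb hn.
have hnk : (n == k) = false by apply/eqP; lia.
have hk1 : (n.+1 == k) by apply/eqP.
rewrite /E D D1 hnk hk1.
by rewrite (pmapTE htr) pmap_d (C2 _ ht _ hn) (pmapT_comp hst0).
Qed.

Lemma KN r r' (h : val r <= val r') n : sdim k s t r n -> pmap W r r' h n (E r n) = E r' n.
Proof.
move=> D; have [hsr [hn | [hn hnb]]] := sdim_spec D.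
  subst n; rewrite /E D eqxx (pmapT_comp (hle_s0 hsr)).
  have hsr' : s <= val r' := le_trans hsr h.
  case D': (sdim k s t r' k) => //.
  have [hnb hk] := sdim_kfalse hsr' (negbT D').
  have [tt [ht [htr hst0]]] := t0_facts hnb.
  rewrite -(pmapT_comp hst0 htr).
  by move: (C3 _ ht hk); rewrite hk => ->; rewrite pmap_zero.
have hnb' : ~~ before (val r') t.
  by apply: contra hnb; apply: before_mono.
have [tt [ht [htr hst0]]] := t0_facts hnb.
have /andP [D1 _] := sdim_low (le_trans hsr h) hnb' hn.
have hnk : (n == k) = false by apply/eqP; lia.
by rewrite /E D D1 hnk (pmapT_comp htr).
Qed.

Definition mkS : phom S W.
Proof.
refine (@PHom S W (fun r n (u : 'rV[rat]_(sdim k s t r n)) => lam u *: E r n) _ _ _).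
- by move=> r n a u v; rewrite lam_lin scalerDl scalerA.
- move=> r n u; rewrite (lam_pdS u) Emul pd_scale.
  have [D|D] : sdim k s t r n \/ ~~ sdim k s t r n by case: (sdim k s t r n); [left|right].
  by rewrite KD.
  by rewrite (lam_S0 u D) !scale0r.
- move=> r r' h n u; rewrite (lam_pmS h u) Emul pmap_scale.
  have [D|D] : sdim k s t r n \/ ~~ sdim k s t r n by case: (sdim k s t r n); [left|right].
  by rewrite KN.
  by rewrite (lam_S0 u D) !scale0r.
Defined.

Lemma mkS_s0 : hc mkS s0 k (ee s0 k) = X k.
Proof.
have Ds0 : sdim k s t s0 k by apply: sdim_k; rewrite hs0 ?lexx ?before_s.
rewrite /= /ee lam_ee Ds0 scale1r /E Ds0 eqxx (pmapTE (lexx (val s0))).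
by rewrite pmap_id.
Qed.

Lemma mkS_t0 tt n : t = Some tt -> n.+1 = k -> hc mkS t0 n (ee t0 n) = Z n.
Proof.
move=> ht hn; have hv := ht0 tt ht.
have hstt : s <= tt by move: hst; rewrite ht /= => /ltW.
have hA : s <= val t0 by rewrite hv.
have hB : ~~ before (val t0) t by rewrite ht hv /= ltxx.
have /andP [Dt0 _] := sdim_low hA hB hn.
have hnk : (n == k) = false by apply/eqP; lia.
rewrite /= /ee lam_ee Dt0 scale1r /E Dt0 hnk (pmapTE (lexx (val t0))).
by rewrite pmap_id.
Qed.

End Mk.
End Sphere.

Lemma cval_dS (Y : nat -> pch) (Yinf : pch) (c : forall i, phom (Y i) Yinf) r n (a : Sig Y r n) :
  cval Y Yinf c (dS Y a) = pd Yinf r n (cval Y Yinf c a).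
Proof. by case: a => i x; rewrite /cval /= hc_d. Qed.

Lemma cval_mS (Y : nat -> pch) (Yinf : pch) (c : forall i, phom (Y i) Yinf) r r' h n
  (a : Sig Y r n) :
  cval Y Yinf c (mS Y h a) = pmap Yinf r r' h n (cval Y Yinf c a).
Proof. by case: a => i x; rewrite /cval /= hc_nat. Qed.

Lemma cval_0 (Y : nat -> pch) (Yinf : pch) (c : forall i, phom (Y i) Yinf) r n :
  cval Y Yinf c (inS Y 0 (0 : pobj (Y 0%N) r n)) = 0.
Proof. by rewrite /cval /= hc0. Qed.

Lemma lv0 (Y : nat -> pch) (y : forall i, phom (Y i) (Y i.+1)) r n M :
  lv y M (inS Y 0 (0 : pobj (Y 0%N) r n)) = 0.
Proof. exact: lv_0. Qed.

Lemma tag_iterH (U : pch) (Y : nat -> pch) (y : forall i, phom (Y i) (Y i.+1)) d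
  (a : {m : nat & phom U (Y m)}) : tag (iter d (stepH y) a) = (d + tag a)%N.
Proof. by elim: d => //= d ->. Qed.

Lemma iterH_ev (U : pch) (Y : nat -> pch) (y : forall i, phom (Y i) (Y i.+1)) d l
  (gg : phom U (Y l)) r n (x : pobj U r n) :
  existT (fun m => (pobj (Y m) r n : Type)) (tag (iter d (stepH y) (existT (fun m => phom U (Y m)) l gg)))
    (hc (tagged (iter d (stepH y) (existT (fun m => phom U (Y m)) l gg))) r n x)
  = iter d (step y) (inS Y l (hc gg r n x)).
Proof. elim: d => // d IH; rewrite !iterS -IH. by []. Qed.

Section Main.
Variables (k : nat) (s : R) (t : option R).
Hypotheses (hs : 0 <= s) (hst : ltRo s t).

Local Notation S := (Sph k s t).
Local Notation ee := (ee k s t).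

Lemma fin_step (Y : nat -> pch) (y : forall i, phom (Y i) (Y i.+1))
  (a1 a2 : {m : nat & phom S (Y m)}) (s0 t0 : nnR) :
  val s0 = s -> (forall tt, t = Some tt -> val t0 = tt) ->
  tag a1 = tag a2 ->
  existT (fun m => (pobj (Y m) s0 k : Type)) (tag a1) (hc (tagged a1) s0 k (ee s0 k)) =
    existT _ (tag a2) (hc (tagged a2) s0 k (ee s0 k)) ->
  (forall n tt, t = Some tt -> n.+1 = k ->
    existT (fun m => (pobj (Y m) t0 n : Type)) (tag a1) (hc (tagged a1) t0 n (ee t0 n)) =
    existT _ (tag a2) (hc (tagged a2) t0 n (ee t0 n))) ->
  clos_refl_sym_trans _ (colim_step y) a1 a2.
Proof.
move=> hs0 ht0; case: a1 => m1 h1; case: a2 => m2 h2 /= e; subst m2 => E1 E2.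
apply: rst_step; apply: cs_heq; apply: (S_ext k s t hs hst _ _ _ _ _ hs0 ht0).
  by move=> n ->; exact: (inj_pair2_eq_dec _ natdec _ _ _ _ E1).
move=> n tt ht hn; exact: (inj_pair2_eq_dec _ natdec _ _ _ _ (E2 n tt ht hn)).
Qed.

Lemma main_sec : compact_rel_I_cell S.
Proof.
move=> Y y Yinf c [_ [Hc Hu]].
have [[pre Hpre] HB] := colim_facts _ _ _ _ Hc Hu.
pose s0 : nnR := exist (fun r : R => 0 <= r) s hs.
have hs0 : val s0 = s by [].
have bs : before s t by case: t hst.
have [t0 ht0] : exists t0 : nnR, forall tt, t = Some tt -> val t0 = tt.
  case: t hst => [tt|] hst'; last by exists s0.
  have hst2 : s < tt := hst'.
  have h0 : 0 <= tt by apply: le_trans hs (ltW hst2).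
  by exists (exist (fun r : R => 0 <= r) tt h0) => tt' [<-].
have Ds0 : sdim k s t s0 k by apply: (sdim_k k s t); rewrite ?hs0 ?lexx.
have hle_st : forall tt, t = Some tt -> val s0 <= val t0.
  by move=> tt ht; rewrite (ht0 tt ht) hs0; move: hst; rewrite ht => /ltW.
have Dt0 : forall tt n, t = Some tt -> n.+1 = k -> sdim k s t t0 n && sdim k s t t0 n.+1.
  move=> tt n ht hn; apply: (sdim_low k s t hs hst) => //.
    by rewrite -hs0; exact: hle_st ht.
  by rewrite ht (ht0 tt ht) /= ltxx.
split.
- move=> f.
  pose xs n := pre s0 n (hc f s0 n (ee s0 n)).
  pose zs n := pre t0 n (hc f t0 n (ee t0 n)).
  have E1 : ev (fun M => pd (Y M) s0 k (lv y M (xs k)) = 0).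
    have R1 : req y (dS Y (xs k)) (inS Y 0 (0 : pobj (Y 0%N) s0 k.+1)).
      apply: HB; rewrite cval_dS cval_0 /xs Hpre hc_d.
      rewrite (rv_dim0 k s t (pd S s0 k (ee s0 k))) ?hc0 //.
      exact: (sdim_succk k s t hs hst s0).
    have := ev_and R1 (ev_ge (tag (xs k))).
    by move=> H; apply: (ev_mono H) => M [e hM]; rewrite -lv_dS // e lv0.
  have E2 : ev (fun M => forall tt, t = Some tt -> forall n, n.+1 = k ->
       pd (Y M) t0 n (lv y M (zs n)) = pmapT s0 t0 n.+1 (lv y M (xs n.+1))).
    case ht: t => [tt|]; last by exists 0%N.
    case hk: k => [|k']; first by exists 0%N => M _ tt' _ n.
    have hle := hle_st tt ht.
    have /andP [D1 D2] := Dt0 tt k' ht (esym hk).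
    have R2 : req y (dS Y (zs k')) (mS Y hle (xs k'.+1)).
      apply: HB; rewrite cval_dS cval_mS /xs /zs !Hpre hc_d hc_nat.
      rewrite pd_ee // pm_ee //; by rewrite -hk.
    have := ev_and R2 (ev_and (ev_ge (tag (zs k'))) (ev_ge (tag (xs k'.+1)))).
    move=> H; apply: (ev_mono H) => M [e [h1 h2]] tt' _ n /eqP; rewrite eqSS => /eqP ->.
    by rewrite -lv_dS // e lv_mS // (pmapTE hle).
  have E3 : ev (fun M => forall tt, t = Some tt -> k = 0%N ->
       pmapT s0 t0 0 (lv y M (xs 0%N)) = 0).
    case ht: t => [tt|]; last by exists 0%N.
    case hk: k => [|k']; last by exists 0%N.
    have hle := hle_st tt ht.
    have R3 : req y (mS Y hle (xs 0%N)) (inS Y 0 (0 : pobj (Y 0%N) t0 0)).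
      apply: HB; rewrite cval_mS cval_0 /xs Hpre hc_nat.
      rewrite (rv_dim0 k s t (pmap S s0 t0 hle 0 (ee s0 0))) ?hc0 //.
      by rewrite /sdim ht (ht0 tt ht) /= ltxx hk /= !andbF.
    have := ev_and R3 (ev_ge (tag (xs 0%N))).
    move=> H; apply: (ev_mono H) => M [e hM] tt' _ _.
    by rewrite (pmapTE hle) -lv_mS // e lv0.
  have := ev_and E1 (ev_and E2 (ev_and E3 (ev_and (ev_ge (tag (xs k))) (ev_ge (tag (zs k.-1)))))).
  move=> [M HM]; have [C1 [C2 [C3 [hxk hzk]]]] := HM M (leqnn M).
  pose g := mkS k s t hs hst (Y M) s0 t0 (fun n => lv y M (xs n)) (fun n => lv y M (zs n))
     hs0 ht0 C1 C2 C3.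
  exists M, g.
  apply: (S_ext k s t hs hst _ _ _ _ _ hs0 ht0).
    move=> n ->.
    change (hc (c M) s0 k (hc g s0 k (ee s0 k)) = hc f s0 k (ee s0 k)).
    rewrite /g mkS_s0.
    by rewrite (cval_lv _ _ _ _ Hc _ hxk) Hpre.
  move=> n tt ht hn.
  change (hc (c M) t0 n (hc g t0 n (ee t0 n)) = hc f t0 n (ee t0 n)).
  rewrite /g (mkS_t0 _ _ _ _ _ _ _ _ _ _ _ _ _ _ _ _ _ ht hn).
  have hzn : (tag (zs n) <= M)%N by move: hzk; rewrite -hn.
  by rewrite (cval_lv _ _ _ _ Hc _ hzn) Hpre.
- move=> i j g g' H.
  have R1 : req y (inS Y i (hc g s0 k (ee s0 k))) (inS Y j (hc g' s0 k (ee s0 k))).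
    exact: (HB _ _ (inS Y i (hc g s0 k (ee s0 k))) (inS Y j (hc g' s0 k (ee s0 k))) (H s0 k (ee s0 k))).
  have R2 : ev (fun M => forall tt, t = Some tt -> forall n, n.+1 = k ->
      lv y M (inS Y i (hc g t0 n (ee t0 n))) = lv y M (inS Y j (hc g' t0 n (ee t0 n)))).
    have [[tt ht]|hnone] : (exists tt, t = Some tt) \/ t = None.
      by case: (t) => [tt|]; [left; exists tt|right].
    2: by exists 0%N => M _ tt' ht'; rewrite hnone in ht'.
    have [hk|[k' hk]] : k = 0%N \/ exists k', k = k'.+1.
      by case: (k) => [|k']; [left|right; exists k'].
      by exists 0%N => M _ tt' _ n hn; rewrite hk in hn.
    have R := HB _ _ (inS Y i (hc g t0 k' (ee t0 k'))) (inS Y j (hc g' t0 k' (ee t0 k'))) (H t0 k' (ee t0 k')).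
    move: R => [M0 HM0]; exists M0 => M hM tt' _ n hn.
    have en : n = k' by move: hn; rewrite hk => -[].
    rewrite en; exact: HM0.
  have := ev_and R1 (ev_and R2 (ev_and (ev_ge i) (ev_ge j))).
  move=> [M HM]; have [e1 [e2 [hi hj]]] := HM M (leqnn M).
  apply: rst_trans (clos_iterH _ _ y (M - i)%N (existT _ i g)) _.
  apply: rst_trans _ (rst_sym _ _ _ _ (clos_iterH _ _ y (M - j)%N (existT _ j g'))).
  apply: (@fin_step Y y _ _ s0 t0 hs0 ht0).
  - by rewrite !tag_iterH /= !subnK.
  - rewrite !iterH_ev -(lvE M (inS Y i (hc g s0 k (ee s0 k))) hi).
    by rewrite -(lvE M (inS Y j (hc g' s0 k (ee s0 k))) hj) e1.
  - move=> n tt ht hn.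
    rewrite !iterH_ev -(lvE M (inS Y i (hc g t0 n (ee t0 n))) hi).
    by rewrite -(lvE M (inS Y j (hc g' t0 n (ee t0 n))) hj) (e2 tt ht n hn).
Qed.

End Main.

Theorem mainTheorem4 :
  forall (k : nat) (s : R) (t : option R),
    0 <= s -> ltRo s t -> compact_rel_I_cell (Sph k s t).
Proof. by move=> k s t hs hst; apply: main_sec. Qed.
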